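(* Let $L\in\mathbb N$ satisfy $\operatorname{rank}\mathcal O_L(\Sigma_s)=n$. Then for any input signal $u$ and any $x(0)$, the IOH $v$ and output $y$ of $\Sigma_s$ satisfy $v(t+1)=\Theta v(t)+\Pi u(t)$ and $y(t)=C\Gamma v(t)$ for all $t\ge L$. Further, $v(t)\in\mathscr P:=\mathrm{im}[\Theta^{L(m+r)-1}\Pi,\dots,\Theta\Pi,\Pi]$ for all $t\ge L$, and $\dim\mathscr P=Lm+n$.
   Context: System $\Sigma_s$: $x(t+1)=Ax(t)+Bu(t)$, $y(t)=Cx(t)$, $t\ge0$, $x\in\mathbb R^n,u\in\mathbb R^m,y\in\mathbb R^r$; standing assumptions: $(A,B,C)$ is a minimal realization and $A$ is Schur. $\mathcal R_L(\Sigma_s)=[A^{L-1}B,\dots,AB,B]$, $\mathcal O_L(\Sigma_s)=[C^\top,(CA)^\top,\dots,(CA^{L-1})^\top]^\top$, and $\mathcal H_L(\Sigma_s)$ is the $Lr\times Lm$ block lower-triangular Toeplitz matrix with $(i,j)$ block $H_{i-j}$ for $j\le i$, where $H_0=0$, $H_k=CA^{k-1}B$. The $L$-length input–output history (IOH) is $v(t)=[u(t-L)^\top,\dots,u(t-1)^\top,y(t-L)^\top,\dots,y(t-1)^\top]^\top\in\mathbb R^{L(m+r)}$, $t\ge L$. $\Gamma=[\mathcal R_L-A^L\mathcal O_L^\dagger\mathcal H_L,\ A^L\mathcal O_L^\dagger]$ ($\dagger$: Moore–Penrose inverse). $\Theta=\mathrm{diag}(S_m,S_r)+EC\Gamma$,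 where $S_k$ is the $Lk\times Lk$ block matrix with $I_k$ in blocks $(i,i+1)$, $i=1,\dots,L-1$, zeros elsewhere, and $E\in\mathbb R^{L(m+r)\times r}$ has $I_r$ in its last $r$ rows and zeros elsewhere. $\Pi\in\mathbb R^{L(m+r)\times m}$ has $I_m$ in rows $(L-1)m+1,\dots,Lm$ and zeros elsewhere. *)

(* Defs.v *)
(* Scalars: an arbitrary real closed field R (covers the reals). *)
From HB Require Import structures.
From mathcomp Require Import all_boot all_order all_algebra.
From mathcomp Require Import complex.
Set Implicit Arguments. Unset Strict Implicit. Unset Printing Implicit Defensive.
Import Order.TTheory GRing.Theory Num.Theory.
Local Open Scope ring_scope.

Section Defs.
Variable R : rcfType.

(* Block row [F 0, F 1, ..., F (L-1)] of p x q blocks : 'M_(p, L*q). *)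
Definition blk_row (L p q : nat) (F : 'I_L -> 'M[R]_(p, q)) : 'M[R]_(p, L * q) :=
  \matrix_(i < p) mxvec (\matrix_(j < L, c < q) F j i c).
Definition blk_col (L p q : nat) (F : 'I_L -> 'M[R]_(p, q)) : 'M[R]_(L * p, q) :=
  (blk_row (fun j => (F j)^T))^T.
(* L x L block matrix with (i,j) block F i j (0-indexed). *)
Definition blk_mx (L p q : nat) (F : 'I_L -> 'I_L -> 'M[R]_(p, q)) : 'M[R]_(L * p, L * q) :=
  blk_col (fun i => blk_row (F i)).

(* Moore-Penrose inverse via a full-rank factorization A = F G
   (F = col_base A full column rank, G = row_base A full row rank):
   A^+ = G^T (G G^T)^{-1} (F^T F)^{-1} F^T. *)
Definition mp_inv (p q : nat) (M : 'M[R]_(p, q)) : 'M[R]_(q, p) :=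
  let F := col_base M in let G := row_base M in
  G^T *m invmx (G *m G^T) *m invmx (F^T *m F) *m F^T.

Variables (n m r : nat) (A : 'M[R]_n) (B : 'M[R]_(n, m)) (C : 'M[R]_(r, n)).

(* Minimal realization: no realization (A',B',C') of the same transfer
   function (equivalently, same Markov parameters C A^k B, k >= 0) has
   a smaller state dimension. *)
Definition minimal_realization : Prop :=
  forall n' (A' : 'M[R]_n') (B' : 'M[R]_(n', m)) (C' : 'M[R]_(r, n')),
    (forall k, C' *m A' ^+ k *m B' = C *m A ^+ k *m B) -> (n <= n')%N.

(* Schur: every (complex) eigenvalue of A has modulus < 1. *)
Definition schur_stable : Prop :=
  forall z : R[i], root (map_poly (fun a : R => Complex a 0) (char_poly A)) z ->
    `|z| < 1.

Variable L : nat.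

Definition Rmat : 'M[R]_(n, L * m) :=
  blk_row (fun j : 'I_L => A ^+ (L - 1 - j) *m B).
Definition Omat : 'M[R]_(L * r, n) := blk_col (fun j : 'I_L => C *m A ^+ j).
Definition Hk (k : nat) : 'M[R]_(r, m) := if k is k'.+1 then C *m A ^+ k' *m B else 0.
Definition Hmat : 'M[R]_(L * r, L * m) :=
  blk_mx (fun i j : 'I_L => if (j <= i)%N then Hk (i - j) else 0).

Definition Gamma : 'M[R]_(n, L * m + L * r) :=
  row_mx (Rmat - A ^+ L *m mp_inv Omat *m Hmat) (A ^+ L *m mp_inv Omat).

Definition Smat (k : nat) : 'M[R]_(L * k) :=
  blk_mx (fun i j : 'I_L => if j == i.+1 :> nat then 1%:M else 0).

Definition last_blk (k : nat) : 'M[R]_(L * k, k) :=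
  blk_col (fun i : 'I_L => if i == L.-1 :> nat then 1%:M else 0).

Definition Emat : 'M[R]_(L * m + L * r, r) := col_mx 0 (last_blk r).
Definition Pimat : 'M[R]_(L * m + L * r, m) := col_mx (last_blk m) 0.

Definition Theta : 'M[R]_(L * m + L * r) :=
  block_mx (Smat m) 0 0 (Smat r) + Emat *m C *m Gamma.

Definition Kmat : 'M[R]_(L * m + L * r, (L * m + L * r) * m) :=
  blk_row (fun j : 'I_(L * m + L * r) => Theta ^+ (L * m + L * r - 1 - j) *m Pimat).

(* IOH v(t) = [u(t-L); ...; u(t-1); y(t-L); ...; y(t-1)] *)
Definition ioh (u : nat -> 'cV[R]_m) (y : nat -> 'cV[R]_r) (t : nat)
  : 'cV[R]_(L * m + L * r) :=
  col_mx (mxvec (\matrix_(i < L, j < m) u (t - L + i)%N j 0))^T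
         (mxvec (\matrix_(i < L, j < r) y (t - L + i)%N j 0))^T.

End Defs.

(* Main.v *)
Require Import Defs.
From HB Require Import structures.
From mathcomp Require Import all_boot all_order all_algebra.
From mathcomp Require Import complex.
From mathcomp Require Import zify.
Import Order.TTheory GRing.Theory Num.Theory.
Local Open Scope ring_scope.

Module Helpers.
Set Implicit Arguments. Unset Strict Implicit. Unset Printing Implicit Defensive.

Section Blk.
Variable R : rcfType.

Lemma sum_mxvec (L q : nat) (f : 'I_(L * q) -> R) :
  \sum_(k < L * q) f k = \sum_(j < L) \sum_(c < q) f (mxvec_index j c).
Proof.
rewrite (reindex _ (curry_mxvec_bij _ _)) /= pair_bigA /=.
by apply: eq_bigr => -[].
Qed.

Lemma blk_rowE L p q (F : 'I_L -> 'M[R]_(p, q)) i j c :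
  blk_row F i (mxvec_index j c) = F j i c.
Proof. by rewrite /blk_row mxE mxvecE mxE. Qed.

Lemma blk_colE L p q (F : 'I_L -> 'M[R]_(p, q)) i j c :
  blk_col F (mxvec_index j c) i = F j c i.
Proof. by rewrite /blk_col mxE blk_rowE mxE. Qed.

Lemma mul_blk_row_col L p q s (F : 'I_L -> 'M[R]_(p, q)) (G : 'I_L -> 'M[R]_(q, s)) :
  blk_row F *m blk_col G = \sum_j F j *m G j.
Proof.
apply/matrixP => i a; rewrite !mxE summxE sum_mxvec; apply: eq_bigr => j _.
by rewrite mxE; apply: eq_bigr => c _; rewrite blk_rowE blk_colE.
Qed.

Lemma mul_blk_col L p q s (F : 'I_L -> 'M[R]_(p, q)) (M : 'M[R]_(q, s)) :
  blk_col F *m M = blk_col (fun i => F i *m M).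
Proof.
apply/matrixP => k a; case/mxvec_indexP: k => i c.
rewrite blk_colE !mxE; apply: eq_bigr => l _; by rewrite blk_colE.
Qed.

Lemma mul_blk_row L p q s (M : 'M[R]_(s, p)) (F : 'I_L -> 'M[R]_(p, q)) :
  M *m blk_row F = blk_row (fun j => M *m F j).
Proof.
apply/matrixP => i k; case/mxvec_indexP: k => j c.
rewrite blk_rowE !mxE; apply: eq_bigr => l _; by rewrite blk_rowE.
Qed.

Definition blk_get L q s (X : 'M[R]_(L * q, s)) (j : 'I_L) : 'M[R]_(q, s) :=
  \matrix_(c, a) X (mxvec_index j c) a.

Lemma blk_col_get L q s (X : 'M[R]_(L * q, s)) : X = blk_col (blk_get X).
Proof.
apply/matrixP => k a; case/mxvec_indexP: k => j c.
by rewrite blk_colE mxE.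
Qed.

Lemma mul_blk_mx L p q s (F : 'I_L -> 'I_L -> 'M[R]_(p, q)) (G : 'I_L -> 'M[R]_(q, s)) :
  blk_mx F *m blk_col G = blk_col (fun i => \sum_j F i j *m G j).
Proof.
rewrite /blk_mx mul_blk_col; apply/matrixP => k a; case/mxvec_indexP: k => i c.
by rewrite !blk_colE mul_blk_row_col.
Qed.

Lemma blk_col_add L q s (F G : 'I_L -> 'M[R]_(q, s)) :
  blk_col F + blk_col G = blk_col (fun i => F i + G i).
Proof.
apply/matrixP => k a; case/mxvec_indexP: k => j c.
by rewrite [LHS]mxE !blk_colE mxE.
Qed.

Lemma blk_col_sub L q s (F G : 'I_L -> 'M[R]_(q, s)) :
  blk_col F - blk_col G = blk_col (fun i => F i - G i).
Proof.
apply/matrixP => k a; case/mxvec_indexP: k => j c.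
by rewrite [LHS]mxE [X in _ + X]mxE !blk_colE !mxE.
Qed.

Lemma blk_col_ext L q s (F G : 'I_L -> 'M[R]_(q, s)) :
  (forall i, F i = G i) -> blk_col F = blk_col G.
Proof.
move=> H; apply/matrixP => k a; case/mxvec_indexP: k => j c.
by rewrite !blk_colE H.
Qed.

End Blk.

Section T2.
Variable R : rcfType.

Lemma mxvec_blk L q (f : 'I_L -> 'cV[R]_q) :
  (mxvec (\matrix_(i < L, j < q) f i j 0))^T = blk_col f.
Proof.
apply/matrixP => k a; case/mxvec_indexP: k => i c.
by rewrite blk_colE mxE ord1 mxvecE mxE.
Qed.

Lemma iohE m r L (u : nat -> 'cV[R]_m) (y : nat -> 'cV[R]_r) t :
  ioh L u y t = col_mx (blk_col (fun i : 'I_L => u (t - L + i)%N))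
                       (blk_col (fun i : 'I_L => y (t - L + i)%N)).
Proof. by rewrite /ioh !mxvec_blk. Qed.

Lemma gram_unit p k (F : 'M[R]_(p, k)) : \rank F = k -> F^T *m F \in unitmx.
Proof.
move=> rF; rewrite -row_free_unit; apply: inj_row_free => v Hv.
set w := F *m v^T.
have w0 : w = 0.
  have : (w^T *m w) = 0.
    by rewrite /w trmx_mul trmxK !mulmxA -(mulmxA v) Hv !mul0mx.
  move/matrixP => /(_ 0 0); rewrite !mxE => /eqP.
  rewrite psumr_eq0 => [/allP Hall|i _]; last by rewrite mxE -expr2 sqr_ge0.
  apply/matrixP => i j; rewrite ord1 [RHS]mxE.
  idtac.
  have := Hall i (mem_index_enum _); rewrite mxE => /eqP/eqP.
  by rewrite mulf_eq0 orbb => /eqP.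
have Ft : row_free F^T by rewrite /row_free mxrank_tr rF.
apply/eqP; rewrite -(mulmx_free_eq0 _ Ft).
by rewrite -(trmxK (v *m F^T)) trmx_mul trmxK -/w w0 trmx0.
Qed.

Lemma mp_invK p q (M : 'M[R]_(p, q)) : \rank M = q -> mp_inv M *m M = 1%:M.
Proof.
move=> rM; rewrite /mp_inv.
set Fb := col_base M; set Gb := row_base M.
have uF : Fb^T *m Fb \in unitmx.
  by apply: gram_unit; have := col_base_full M; rewrite /row_full => /eqP.
have uG : Gb^T^T *m Gb^T \in unitmx.
  by apply: gram_unit; rewrite mxrank_tr; have := row_base_free M; rewrite /row_free => /eqP.
rewrite trmxK in uG.
have hM : M = Fb *m Gb by rewrite /Fb /Gb mulmx_base.
have GbF : row_full Gb.
  by rewrite /row_full; have := row_base_free M; rewrite /row_free => /eqP ->; rewrite rM.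
clearbody Fb Gb.
rewrite [X in _ *m X = _]hM mulmxA -(mulmxA _ Fb^T Fb) mulmxKV //.
case/row_fullP: GbF => D HD.
rewrite -[LHS]mul1mx -HD -!mulmxA.
by rewrite (mulmxA Gb) (mulmxA (Gb *m _)) mulmxV // mul1mx.
Qed.

End T2.

Section T3.
Variable R : rcfType.

Lemma pow_comb N (M : 'M[R]_N) k :
  exists c : 'I_N -> R, M ^+ k = \sum_(i < N) c i *: M ^+ i.
Proof.
case: N M => [|N] M.
  by exists (fun _ => 0); apply/matrixP => -[].
have hd : (degree_mxminpoly M <= N.+1)%N.
  have := dvdp_leq (monic_neq0 (char_poly_monic M)) (mxminpoly_dvd_char M).
  by rewrite size_mxminpoly size_char_poly.
have H1 := horner_mx_mem M 'X^k.
rewrite rmorphXn /= horner_mx_X in H1.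
have H2 : (powers_mx M (degree_mxminpoly M) <= powers_mx M N.+1)%MS.
  apply/row_subP => i; rewrite rowK.
  have -> : mxvec (M ^+ i) = row (widen_ord hd i) (powers_mx M N.+1) by rewrite rowK.
  exact: row_sub.
case/submxP: (submx_trans H1 H2) => D HD.
exists (fun i => D 0 i); apply: (can_inj mxvecK).
rewrite HD mulmx_sum_row linear_sum; apply: eq_bigr => i _.
by rewrite linearZ rowK.
Qed.

Definition krylov N p (M : 'M[R]_N) (P : 'M[R]_(N, p)) : 'M[R]_(N, N * p) :=
  blk_row (fun j : 'I_N => M ^+ (N - 1 - j) *m P).

Lemma krylov_pow N p (M : 'M[R]_N) (P : 'M[R]_(N, p)) k :
  exists W : 'M[R]_(N * p, p), M ^+ k *m P = krylov M P *m W.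
Proof.
have [c Hc] := pow_comb M k.
exists (blk_col (fun j : 'I_N => c (rev_ord j) *: 1%:M)).
rewrite /krylov mul_blk_row_col Hc mulmx_suml.
rewrite (reindex_inj rev_ord_inj) /=; apply: eq_bigr => j _.
rewrite -scalemxAl -scalemxAr mulmx1; congr (_ *: (_ ^+ _ *m _)).
rewrite /=.
by rewrite -subnDA add1n.
Qed.

End T3.

Section T4.
Variable R : rcfType.

Lemma krylov_inv N p (M : 'M[R]_N) (P : 'M[R]_(N, p)) :
  exists Z, M *m krylov M P = krylov M P *m Z.
Proof.
have : forall j : 'I_N, exists W, M *m (M ^+ (N - 1 - j) *m P) = krylov M P *m W.
  by move=> j; rewrite mulmxA mulmxE -exprS; apply: krylov_pow.
case/fin_all_exists => W HW.
exists (blk_row W); rewrite mul_blk_row /krylov mul_blk_row.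
apply/matrixP => i k; case/mxvec_indexP: k => j c.
by rewrite !blk_rowE HW.
Qed.

Lemma ctrb n m r (A : 'M[R]_n) (B : 'M[R]_(n, m)) (C : 'M[R]_(r, n)) :
  minimal_realization A B C -> row_free (krylov A B).
Proof.
move=> Hmin.
set Kc := krylov A B.
have key : forall k (T : 'M_(n, k)) (G : 'M_(k, n * m)) G',
    Kc = T *m G -> G *m G' = 1%:M -> (n <= k)%N.
  move=> k T G G' hK HG'.
  have [Z HZ] := krylov_inv A B; rewrite -/Kc in HZ.
  have [W0 HW0] := krylov_pow A B 0.
  rewrite expr0 mul1mx -/Kc in HW0.
  have HAT : A *m T = T *m (G *m Z *m G').
    have hT : T = Kc *m G' by rewrite hK -mulmxA HG' mulmx1.
    by rewrite {1}hT mulmxA HZ hK !mulmxA.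
  have HB : B = T *m (G *m W0) by rewrite HW0 hK mulmxA.
  have Hpow : forall j, A ^+ j *m T = T *m (G *m Z *m G') ^+ j.
    elim => [|j IH]; first by rewrite !expr0 mul1mx mulmx1.
    rewrite exprS -mulmxE -mulmxA IH mulmxA HAT -mulmxA.
    by rewrite [in RHS]exprS -mulmxE.
  apply: (Hmin _ (G *m Z *m G') (G *m W0) (C *m T)) => j.
  rewrite -(mulmxA C) -Hpow.
  by rewrite HB !mulmxA.
case/row_freeP: (row_base_free Kc) => G' HG'.
rewrite /row_free eqn_leq rank_leq_row /=.
exact: (key _ (col_base Kc) (row_base Kc) G' (esym (mulmx_base Kc)) HG').
Qed.

End T4.

Section T5.
Variable R : rcfType.

Lemma mxexpS N (M : 'M[R]_N) i : M *m M ^+ i = M ^+ i.+1.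
Proof. by rewrite exprS -mulmxE. Qed.
Variables (n m r : nat) (A : 'M[R]_n) (B : 'M[R]_(n, m)) (C : 'M[R]_(r, n)).
Variables (u : nat -> 'cV[R]_m) (x : nat -> 'cV[R]_n) (y : nat -> 'cV[R]_r).
Hypothesis Hx : forall t, x t.+1 = A *m x t + B *m u t.
Hypothesis Hy : forall t, y t = C *m x t.

Lemma traj_sum s i :
  x (s + i)%N = A ^+ i *m x s + \sum_(j < i) A ^+ (i - 1 - j) *m B *m u (s + j)%N.
Proof.
elim: i => [|i IH]; first by rewrite addn0 expr0 mul1mx big_ord0 addr0.
rewrite addnS Hx IH mulmxDr mulmxA mxexpS big_ord_recr /= addrA.
rewrite subSS subn0 subnn expr0 mul1mx; congr (_ + _ + _).
rewrite mulmx_sumr; apply: eq_bigr => j _; rewrite !mulmxA mxexpS.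
by rewrite -subnDA add1n -subSn ?subSS // ltn_ord.
Qed.


Variable L : nat.

Lemma ypast s :
  blk_col (fun i : 'I_L => y (s + i)%N) =
  Hmat A B C L *m blk_col (fun i : 'I_L => u (s + i)%N) + Omat A C L *m x s.
Proof.
rewrite /Hmat mul_blk_mx /Omat mul_blk_col blk_col_add; apply: blk_col_ext => i.
rewrite Hy traj_sum mulmxDr addrC !mulmxA; congr (_ + _).
rewrite mulmx_sumr.
rewrite (big_ord_widen L (fun j => C *m (A ^+ (i - 1 - j) *m B *m u (s + j)%N))); last exact: ltnW.
rewrite big_mkcond /=; apply: eq_bigr => j _.
case: (ltngtP j i) => hij.
- rewrite /Hk.
  have -> : (i - j = (i - 1 - j).+1)%N by lia.
  by rewrite !mulmxA.
- by rewrite ?mul0mx.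
- have -> : i = j :> nat by [].
  by rewrite subnn /Hk mul0mx.
Qed.

Lemma xnow s :
  x (s + L)%N = A ^+ L *m x s + Rmat A B L *m blk_col (fun i : 'I_L => u (s + i)%N).
Proof.
rewrite traj_sum /Rmat mul_blk_row_col; congr (_ + _); apply: eq_bigr => j _; by rewrite mulmxA.
Qed.

Lemma gamma_x t : (L <= t)%N -> \rank (Omat A C L) = n ->
  Gamma A B C L *m ioh L u y t = x t.
Proof.
move=> HL HO.
have HP := mp_invK HO.
rewrite iohE /Gamma; move: (mp_inv (Omat A C L)) HP => P HP.
rewrite mul_row_col ypast mulmxBl mulmxDr.
rewrite -!mulmxA (mulmxA P (Omat A C L)) HP mul1mx.
rewrite addrA subrK.
by rewrite -{3}(subnK HL) xnow addrC.
Qed.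

End T5.

Section T6.
Variable R : rcfType.

Lemma shift_blk L k (f : nat -> 'cV[R]_k) t : (L <= t)%N ->
  Smat R L k *m blk_col (fun i : 'I_L => f (t - L + i)%N) + last_blk R L k *m f t =
  blk_col (fun i : 'I_L => f (t.+1 - L + i)%N).
Proof.
move=> HL.
rewrite /Smat mul_blk_mx /last_blk mul_blk_col blk_col_add; apply: blk_col_ext => i.
case: (ltnP i.+1 L) => hi.
- have -> : (i == L.-1 :> nat) = false by apply/eqP; lia.
  rewrite mul0mx addr0 (bigD1 (Ordinal hi)) //= eqxx mul1mx big1 => [|j hj].
    by rewrite addr0; congr f; lia.
  have -> : (j == i.+1 :> nat) = false.
    apply/negP => /eqP hj'; move: hj => /eqP; apply; apply: val_inj => /=; exact: hj'.
  by rewrite mul0mx.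
- have -> : (i == L.-1 :> nat) = true by apply/eqP; have := ltn_ord i; lia.
  rewrite mul1mx big1 => [|j _]; last first.
    have -> : (j == i.+1 :> nat) = false by apply/eqP; have := ltn_ord j; lia.
    by rewrite mul0mx.
  by rewrite add0r; congr f; have := ltn_ord i; lia.
Qed.


Variables (n m r : nat) (A : 'M[R]_n) (B : 'M[R]_(n, m)) (C : 'M[R]_(r, n)).
Variables (u : nat -> 'cV[R]_m) (x : nat -> 'cV[R]_n) (y : nat -> 'cV[R]_r).
Hypothesis Hx : forall t, x t.+1 = A *m x t + B *m u t.
Hypothesis Hy : forall t, y t = C *m x t.
Variable L : nat.
Hypothesis HO : \rank (Omat A C L) = n.

Lemma theta_step t : (L <= t)%N ->
  ioh L u y t.+1 = Theta A B C L *m ioh L u y t + Pimat R m r L *m u t.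
Proof.
move=> HL.
have Hyt : y t = C *m (Gamma A B C L *m ioh L u y t).
  by rewrite (gamma_x Hx Hy) // Hy.
rewrite /Theta mulmxDl -!mulmxA -Hyt !iohE.
rewrite mul_block_col /Emat /Pimat !mul_col_mx !mul0mx !add_col_mx !addr0 !add0r.
by rewrite (shift_blk u HL) (shift_blk y HL).
Qed.

End T6.

Section T7.
Variable R : rcfType.

Lemma colspace_rank p a b (X : 'M[R]_(p, a)) (Y : 'M[R]_(p, b)) :
  (forall w : 'cV_a, exists z : 'cV_b, X *m w = Y *m z) -> (\rank X <= \rank Y)%N.
Proof.
move=> H; rewrite -mxrank_tr -(mxrank_tr Y); apply: mxrankS.
apply/row_subP => j; rewrite -tr_col colE.
have [z ->] := H (delta_mx j 0).
by rewrite trmx_mul submxMl.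
Qed.

Definition getb L q (w : 'cV[R]_(L * q)) (s : nat) : 'cV[R]_q :=
  if insub s is Some j then blk_get w j else 0.

Lemma getb_ord L q (w : 'cV[R]_(L * q)) (j : 'I_L) : getb w j = blk_get w j.
Proof. by rewrite /getb valK. Qed.

Lemma blk_col0 L q s : blk_col (fun _ : 'I_L => (0 : 'M[R]_(q, s))) = 0.
Proof.
apply/matrixP => k a; case/mxvec_indexP: k => j c.
by rewrite blk_colE !mxE.
Qed.

Variables (n m r : nat) (A : 'M[R]_n) (B : 'M[R]_(n, m)) (C : 'M[R]_(r, n)).

Fixpoint traj (x0 : 'cV[R]_n) (u : nat -> 'cV[R]_m) (s : nat) : 'cV[R]_n :=
  if s is s'.+1 then A *m traj x0 u s' + B *m u s' else x0.

Lemma traj_Hx x0 u : forall t, traj x0 u t.+1 = A *m traj x0 u t + B *m u t.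
Proof. by []. Qed.

Lemma traj_Hy x0 u : forall t, (fun s => C *m traj x0 u s) t = C *m traj x0 u t.
Proof. by []. Qed.

Variable L : nat.
Hypothesis HO : \rank (Omat A C L) = n.

Definition Vm : 'M[R]_(L * m + L * r, L * m + n) :=
  block_mx 1%:M 0 (Hmat A B C L) (Omat A C L).

Lemma ioh_V (u : nat -> 'cV[R]_m) (x : nat -> 'cV[R]_n) (y : nat -> 'cV[R]_r) :
  (forall t, x t.+1 = A *m x t + B *m u t) -> (forall t, y t = C *m x t) -> forall t,
  ioh L u y t = Vm *m col_mx (blk_col (fun i : 'I_L => u (t - L + i)%N)) (x (t - L)%N).
Proof.
move=> Hx Hy t.
by rewrite iohE /Vm mul_block_col mul1mx mul0mx addr0 (ypast Hx Hy).
Qed.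

Lemma rank_Vm : \rank Vm = (L * m + n)%N.
Proof.
apply/eqP; change (row_full Vm); apply/row_fullP.
exists (block_mx 1%:M 0 (- (mp_inv (Omat A C L) *m Hmat A B C L)) (mp_inv (Omat A C L))).
rewrite /Vm mulmx_block !mul1mx !mul0mx !mulmx0 !addr0 add0r mp_invK //.
by rewrite mulmx1 addNr scalar_mx_block.
Qed.


Lemma Vm_inv (z : 'cV[R]_(L * m + n)) (a : 'cV[R]_m) :
  exists z', Theta A B C L *m (Vm *m z) + Pimat R m r L *m a = Vm *m z'.
Proof.
pose w := usubmx z; pose x0 := dsubmx z.
pose u' s := if (s < L)%N then getb w s else a.
pose x := traj x0 u'; pose y s := C *m x s.
have Hx := traj_Hx x0 u'; have Hy : forall t, y t = C *m x t by [].
have hL : ioh L u' y L = Vm *m z.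
  rewrite (ioh_V Hx Hy) subnn; congr (Vm *m _).
  rewrite -[RHS]vsubmxK; congr col_mx.
  rewrite [RHS](blk_col_get); apply: blk_col_ext => i.
  by rewrite add0n /u' ltn_ord getb_ord.
have ua : u' L = a by rewrite /u' ltnn.
exists (col_mx (blk_col (fun i : 'I_L => u' (L.+1 - L + i)%N)) (x (L.+1 - L)%N)).
rewrite -hL -ua -(theta_step Hx Hy HO (leqnn L)).
exact: (ioh_V Hx Hy).
Qed.

Lemma pow_Vm k (a : 'cV[R]_m) :
  exists z, Theta A B C L ^+ k *m Pimat R m r L *m a = Vm *m z.
Proof.
elim: k a => [|k IH] a.
  have [z' Hz'] := Vm_inv 0 a.
  by exists z'; rewrite expr0 mul1mx -Hz' !mulmx0 add0r.
have [z Hz] := IH a.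
have [z' Hz'] := Vm_inv z 0.
exists z'; rewrite -mxexpS -!mulmxA (mulmxA (_ ^+ k)) Hz -Hz' mulmx0 addr0.
by [].
Qed.

Lemma K_Vm (w : 'cV[R]_((L * m + L * r) * m)) :
  exists z, Kmat A B C L *m w = Vm *m z.
Proof.
rewrite (blk_col_get w) /Kmat mul_blk_row_col.
have : forall j : 'I_(L * m + L * r), exists z,
  Theta A B C L ^+ (L * m + L * r - 1 - j) *m Pimat R m r L *m blk_get w j = Vm *m z.
  by move=> j; apply: pow_Vm.
case/fin_all_exists => Z HZ.
by exists (\sum_j Z j); rewrite mulmx_sumr; apply: eq_bigr => j _; rewrite HZ.
Qed.

Definition inK (v : 'cV[R]_(L * m + L * r)) := exists w, v = Kmat A B C L *m w.

Lemma reach_K (u : nat -> 'cV[R]_m) (x : nat -> 'cV[R]_n) (y : nat -> 'cV[R]_r) :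
  (forall t, x t.+1 = A *m x t + B *m u t) -> (forall t, y t = C *m x t) ->
  inK (ioh L u y L) -> forall t, (L <= t)%N -> inK (ioh L u y t).
Proof.
move=> Hx Hy H0 t HL; rewrite -(subnKC HL).
elim: (t - L)%N => [|d [w Hw]]; first by rewrite addn0.
have [Z HZ] : exists Z, Theta A B C L *m Kmat A B C L = Kmat A B C L *m Z
  := krylov_inv _ _.
have [W HW] : exists W, Theta A B C L ^+ 0 *m Pimat R m r L = Kmat A B C L *m W
  := krylov_pow _ _ 0.
rewrite expr0 mul1mx in HW.
exists (Z *m w + W *m u (L + d)%N).
rewrite addnS (theta_step Hx Hy HO (leq_addr d L)) Hw mulmxDr !mulmxA HZ HW.
by [].
Qed.

Hypothesis Hmin : minimal_realization A B C.

Lemma Vm_K (z : 'cV[R]_(L * m + n)) : inK (Vm *m z).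
Proof.
pose w := usubmx z; pose x0 := dsubmx z.
case/row_freeP: (ctrb Hmin) => Ri HRi.
pose Wc := Ri *m x0.
have hx0 : x0 = krylov A B *m Wc by rewrite /Wc mulmxA HRi mul1mx.
pose u' s := if (s < L + n)%N then (if (L <= s)%N then getb Wc (s - L) else 0)
             else getb w (s - (L + n)).
pose x := traj 0 u'; pose y s := C *m x s.
have Hx := traj_Hx 0 u'; have Hy : forall t, y t = C *m x t by [].
have xL : x L = 0.
  rewrite /x; have := traj_sum Hx 0 L; rewrite add0n => ->.
  rewrite mulmx0 add0r big1 // => j _.
  rewrite add0n /u'.
  have -> : (j < L + n)%N by have := ltn_ord j; lia.
  by rewrite leqNgt ltn_ord mulmx0.
have xLn : x (L + n)%N = x0.
  rewrite /x (traj_sum Hx) -/x xL mulmx0 add0r hx0 /krylov (blk_col_get Wc) mul_blk_row_col.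
  apply: eq_bigr => j _; rewrite /u'.
  have -> : (L + j < L + n)%N by rewrite ltn_add2l.
  by rewrite leq_addr addKn getb_ord.
have H0 : inK (ioh L u' y L).
  exists 0; rewrite mulmx0 (ioh_V Hx Hy) subnn.
  have -> : blk_col (fun i : 'I_L => u' (0 + i)%N) = 0.
    rewrite -(blk_col0 L m 1); apply: blk_col_ext => i.
    rewrite add0n /u'.
    have -> : (i < L + n)%N by have := ltn_ord i; lia.
    by rewrite leqNgt ltn_ord.
  by rewrite col_mx0 mulmx0.
have := reach_K Hx Hy H0 (leq_addl (L + n) L).
rewrite (ioh_V Hx Hy) addnK -/x xLn.
suff -> : blk_col (fun i : 'I_L => u' (L + n + i)%N) = w by rewrite vsubmxK.
rewrite [RHS]blk_col_get; apply: blk_col_ext => i.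
rewrite /u' ltnNge leq_addr /= addKn getb_ord.
by [].
Qed.

End T7.

End Helpers.
Import Helpers.
Unset Implicit Arguments.

Theorem lemma1 (R : rcfType) (n m r : nat)
  (A : 'M[R]_n) (B : 'M[R]_(n, m)) (C : 'M[R]_(r, n))
  (Hmin : minimal_realization A B C) (Hschur : schur_stable A)
  (L : nat) (HO : \rank (Omat A C L) = n)
  (u : nat -> 'cV[R]_m) (x : nat -> 'cV[R]_n) (y : nat -> 'cV[R]_r)
  (Hx : forall t, x t.+1 = A *m x t + B *m u t)
  (Hy : forall t, y t = C *m x t) :
  (forall t, (L <= t)%N ->
     ioh L u y t.+1 = Theta A B C L *m ioh L u y t + Pimat R m r L *m u t
     /\ y t = C *m Gamma A B C L *m ioh L u y t)
  /\ (forall t, (L <= t)%N ->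
        exists w : 'cV[R]_((L * m + L * r) * m), ioh L u y t = Kmat A B C L *m w)
  /\ \rank (Kmat A B C L) = (L * m + n)%N.
Proof.
split; [|split].
- move=> t HL; split; first exact: (theta_step Hx Hy HO HL).
  by rewrite -mulmxA (gamma_x Hx Hy HL HO) Hy.
- move=> t HL; apply: (reach_K HO Hx Hy _ HL).
  rewrite (ioh_V L Hx Hy); exact: Vm_K.
- apply/eqP; rewrite eqn_leq; apply/andP; split.
  + rewrite -(rank_Vm B HO); apply: colspace_rank => w; exact: K_Vm.
  + rewrite -(rank_Vm B HO); apply: colspace_rank => z.
    have [w Hw] := Vm_K HO Hmin z; by exists w.
Qed.
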